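(* Let $n\geq 2$ and let $k$ be a positive integer with $k+2^k-1\leq n$. For every positive integer $c$ with $n-2^k+1\leq c\leq (n-k-2^k+2)2^k-1$, there is an arithmetical structure $(r_1,\dots,r_n)$ on $K_n$ with $r_1=c$.
   Context: An arithmetical structure on the complete graph $K_n$ is an $n$-tuple $(r_1,r_2,\dots,r_n)$ of positive integers with $\gcd(r_1,\dots,r_n)=1$ such that $r_j$ divides $\sum_{i=1}^n r_i$ for every $j$. The entries are always listed so that $r_1\geq r_2\geq\dots\geq r_n$; thus $r_1$ is the largest value of the structure. *)

(* Defs.v *)
From mathcomp Require Import all_boot.
Set Implicit Arguments. Unset Strict Implicit. Unset Printing Implicit Defensive.

(* An arithmetical structure on K_n: an n-tuple (r_1,...,r_n) of positive
   integers, listed nonincreasingly (r_1 >= ... >= r_n), with gcd 1 and such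
   that every r_j divides the sum of all entries.  Represented as a list r
   with r_1 = nth 0 r 0. *)
Definition arith_structure_Kn (n : nat) (r : seq nat) : Prop :=
  [/\ size r = n,
      all (fun x => 0 < x) r,
      sorted geq r,
      foldr gcdn 0 r = 1
    & all (fun x => x %| sumn r) r].

(* Main.v *)
Require Import Defs.
From mathcomp Require Import all_boot.
From mathcomp Require Import zify.

Lemma build (K N : nat) : forall k c, k <= K -> k <= N.+1 -> N.+1 <= c ->
  c <= (N.+1 + 1 - k) * 2 ^ k - 1 ->
  exists s : seq nat, [/\ size s = N.+1, all (fun x => x %| 2 ^ K) s,
     1 \in s & sumn s = c].
Proof.
elim: N => [|N IH] k c hkK hk hc hcM.
  have hk1 : k < 2 ^ k := ltn_expl k (isT : 1 < 2).
  have hc1: c = 1.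
    move: hk hcM hk1; case: k {hkK} => [|[|]] //=; rewrite ?expn0 ?expn1; lia.
  subst c. exists [:: 1]. split => //=; rewrite ?dvd1n ?inE //.
wlog hkN : k hkK hk hcM / k <= N.+1.
  move=> W. have [h|h] := leqP k N.+1; first by apply: (W k).
  have hk' : k = N.+2 by lia. subst k.
  apply: (W N.+1) => //; first lia.
  move: hcM. rewrite !expnS.
  have -> : N.+2 + 1 - N.+2 = 1 by lia.
  have -> : N.+2 + 1 - N.+1 = 2 by lia. lia.
have hk1 : k < 2 ^ k := ltn_expl k (isT : 1 < 2).
have step : forall j k' c', j <= K -> k' <= K -> k' <= N.+1 -> N.+1 <= c' ->
    c' <= (N.+1 + 1 - k') * 2 ^ k' - 1 ->
    c = 2 ^ j + c' ->
    exists s : seq nat, [/\ size s = N.+2, all (fun x => x %| 2 ^ K) s,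
     1 \in s & sumn s = c].
  move=> j k' c' hjK hkK' hjN h1 h2 ->.
  have [s [hs1 hs2 hs3 hs4]] := IH k' c' hkK' hjN h1 h2.
  have hdj : 2 ^ j %| 2 ^ K by rewrite dvdn_exp2l.
  exists (2 ^ j :: s); split => //=.
  - by rewrite hs1.
  - by rewrite hdj hs2.
  - by rewrite inE hs3 orbT.
  - by rewrite hs4.
have hp1 : 1 <= 2 ^ k by rewrite expn_gt0.
set M := N.+1 in hkN hk hcM hc step *.
have [hbig|hsmall] := leqP (M + 2 ^ k) c.
  apply: (step k k (c - 2 ^ k)) => //; lia.
have [hlt|hEq] := ltnP k M.
  apply: (step 0 k (c - 1)) => //; rewrite ?expn0; try lia.
  have : M - 1 <= (M - k) * 2 ^ k.
    have h : M - k >= 1 by lia.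
    have : (M - k) * 2 ^ k >= (M - k) * (k + 1) by rewrite leq_mul2l; lia.
    nia.
  have -> : M + 1 - k = (M - k).+1 by lia.
  rewrite mulSn. lia.
have hk' : k = M by lia. subst k.
have hpN : 2 ^ M = 2 * 2 ^ N by rewrite -expnS.
have hNp : M <= 2 ^ N by exact: ltn_expl.
have hM1 : M + 1 - N = 2 by lia.
have [hle|hgt] := leqP c (2 ^ M).
  apply: (step 0 N (c - 1)); rewrite ?expn0 ?hM1; lia.
apply: (step N N (c - 2 ^ N)); rewrite ?hM1; lia.
Qed.

Lemma foldr_gcd1 (r : seq nat) : 1 \in r -> foldr gcdn 0 r = 1.
Proof.
elim: r => [//|a r IH] /=; rewrite inE => /orP [/eqP <-|h]; first by rewrite gcd1n.
by rewrite IH // gcdn1.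
Qed.

Lemma le_sumn (s : seq nat) x : x \in s -> x <= sumn s.
Proof.
elim: s => [//|a s IH] /=; rewrite inE => /orP [/eqP ->|h]; first exact: leq_addr.
exact: leq_trans (IH h) (leq_addl _ _).
Qed.

Theorem proposition2p4 (n k c : nat) :
  2 <= n -> 0 < k -> k + 2 ^ k - 1 <= n ->
  0 < c -> n - 2 ^ k + 1 <= c -> c <= (n + 2 - k - 2 ^ k) * 2 ^ k - 1 ->
  exists r : seq nat, arith_structure_Kn n r /\ nth 0 r 0 = c.
Proof.
move=> hn hk hkn hc hlo hhi.
have hk1 : k < 2 ^ k := ltn_expl k (isT : 1 < 2).
set p := 2 ^ k in hk1 hkn hlo hhi.
have hp2 : 2 <= p by rewrite /p -(expn1 2) leq_exp2l.
have e1 : (n - p).+1 + 1 - k = n + 2 - k - p by lia.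
have h1 : k <= (n - p).+1 by lia.
have h2 : (n - p).+1 <= c by lia.
have h3 : c <= ((n - p).+1 + 1 - k) * 2 ^ k - 1 by rewrite e1.
have [s [hs1 hs2 hs3 hs4]] := @build k (n - p) k c (leqnn k) h1 h2 h3.
set l := nseq (p - 1) c ++ s.
have hperm : perm_eq (sort geq l) l by rewrite perm_sort perm_refl.
have hmem x : (x \in sort geq l) = (x \in l) by rewrite (perm_mem hperm).
have hdp x : x \in s -> x %| p := fun h => allP hs2 x h.
have hlc x : x \in l -> x <= c.
  rewrite mem_cat mem_nseq => /orP [/andP [_ /eqP ->]//|h].
  rewrite -hs4; exact: le_sumn.
have hcl : c \in l by rewrite mem_cat mem_nseq; apply/orP; left; rewrite eqxx andbT; lia.
have hsum : sumn (sort geq l) = p * c.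
  rewrite (perm_sumn hperm) /l sumn_cat hs4.
  have -> : sumn (nseq (p - 1) c) = (p - 1) * c.
    elim: (p - 1) => [|m IH] //=; by rewrite IH mulSn.
  by rewrite -{2}(subnK (ltnW hp2)) mulnDl mul1n.
exists (sort geq l); split; first split.
- by rewrite size_sort size_cat size_nseq hs1; lia.
- apply/allP => x; rewrite hmem mem_cat mem_nseq => /orP [/andP [_ /eqP ->]//|h].
  exact: dvdn_gt0 (ltnW hp2) (hdp x h).
- by apply: sort_sorted => a b; rewrite /= leq_total.
- by apply: foldr_gcd1; rewrite hmem mem_cat hs3 orbT.
- apply/allP => x; rewrite hmem hsum mem_cat mem_nseq => /orP [/andP [_ /eqP ->]|h].
    exact: dvdn_mull.
  exact: dvdn_mulr (hdp x h).
have hsrt : sorted geq (sort geq l) by apply: sort_sorted => a b; rewrite /= leq_total.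
have : c \in sort geq l by rewrite hmem.
case E: (sort geq l) hsrt => [//|h t] /= hpath hin.
have hh : h \in l by rewrite -hmem E mem_head.
have hall := order_path_min (fun a b d (h1 : a <= b) (h2 : d <= a) => leq_trans h2 h1) hpath.
apply/eqP; rewrite eqn_leq hlc //=.
move: hin; rewrite inE => /orP [/eqP -> //|ht].
exact: (allP hall c ht).
Qed.
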